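(* Let $s=(s_1,\ldots,s_n)$ be a sequence of positive integers. Then the local $h^\ast$-polynomial of the $s$-lecture hall simplex $P_n^s$ is \[ \ell^\ast(P_n^s;z)=\sum_{e\in\widetilde{I_n^s}}z^{\mathrm{asc}(e)}=\sum_{e\in\widetilde{I_n^s}}z^{\mathrm{des}(e)}. \]
   Context: $P_n^s=\{x\in\mathbb{R}^n: 0\le x_1/s_1\le\cdots\le x_n/s_n\le 1\}$. For a lattice $d$-simplex $\Delta=\mathrm{conv}(v^{(0)},\ldots,v^{(d)})\subset\mathbb{R}^n$, $\ell^\ast(\Delta;z)=\sum_{x\in\Pi^\circ_\Delta\cap\mathbb{Z}^{n+1}}z^{x_{n+1}}$ where $\Pi^\circ_\Delta=\{\sum_{i=0}^d\lambda_i(v^{(i)},1): 0<\lambda_i<1\}$. Set $s_0=s_{n+1}=1$ and let $\widetilde{I_n^s}$ be the set of integer sequences $(e_0,e_1,\ldots,e_{n+1})$ with $e_0=e_{n+1}=0$, $0\le e_i<s_i$ for $i\in[n]$, and $e_i/s_i\neq e_{i+1}/s_{i+1}$ for all $i\in\{0,\ldots,n\}$. For such $e$, an index $i\in\{0,\ldots,n\}$ is an ascent if $e_i/s_i<e_{i+1}/s_{i+1}$ and a descent if $e_i/s_i>e_{i+1}/s_{i+1}$; $\mathrm{asc}(e),\mathrm{des}(e)$ count them. *)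

(* Defs.v *)
From HB Require Import structures.
From mathcomp Require Import all_boot all_order all_algebra.
From mathcomp Require Import boolp reals.
Set Implicit Arguments. Unset Strict Implicit. Unset Printing Implicit Defensive.
Import Order.TTheory GRing.Theory Num.Theory.
Local Open Scope ring_scope.

(* A lattice d-simplex in R^n is given by its vertex matrix V : rows
   v^(0),...,v^(d) (each in Z^n).  [wc V i j] is coordinate j of the lifted
   vector (v^(i),1) in Z^(n+1); the last coordinate (index ord_max) is 1. *)
Definition wc (d n : nat) (V : 'M[int]_(d.+1, n)) (i : 'I_d.+1) (j : 'I_n.+1)
  : int :=
  match unlift ord_max j with Some j' => V i j' | None => 1 end.

Definition in_open_par (R : realType) (d n : nat) (V : 'M[int]_(d.+1, n))
  (x : 'I_n.+1 -> int) : Prop :=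
  exists lam : 'I_d.+1 -> R,
    (forall i, 0 < lam i < 1) /\
    (forall j, (x j)%:~R = \sum_(i < d.+1) lam i * (wc V i j)%:~R).

(* Every point of Pi°_Delta has |x_j| <= B, with B the sum of all |w_ij|;
   so the lattice points of Pi°_Delta are among the integer vectors of the
   box [-B,B]^(n+1), encoded as k |-> k - B for k : 'I_(2B+1). *)
Definition pbound (d n : nat) (V : 'M[int]_(d.+1, n)) : nat :=
  (\sum_(i < d.+1) \sum_(j < n.+1) `|wc V i j|)%N.

Definition boxpt (B m : nat) (x : {ffun 'I_m -> 'I_(2 * B).+1}) (j : 'I_m)
  : int := (x j)%:Z - B%:Z.

Definition lstar (R : realType) (d n : nat) (V : 'M[int]_(d.+1, n)) : {poly int} :=
  \sum_(x : {ffun 'I_n.+1 -> 'I_(2 * pbound V).+1}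
          | `[< in_open_par R V (boxpt x) >])
     'X^(absz (boxpt x ord_max)).

(* P_n^s = {0 <= x_1/s_1 <= ... <= x_n/s_n <= 1} = conv(v^(0),...,v^(n)),
   where (0-indexed coordinates j = 0..n-1) v^(i)_j = s_j if i <= j, else 0;
   v^(0) = (s_1,...,s_n) and v^(n) = 0. *)
Definition lhs_vert (n : nat) (s : 'I_n -> nat) : 'M[int]_(n.+1, n) :=
  \matrix_(i < n.+1, j < n) (if (i <= j)%N then (s j)%:Z else 0).

(* e : 'I_n -> nat encodes (e_1,...,e_n); the full sequence is
   (e_0,...,e_{n+1}) with e_0 = e_{n+1} = 0, and s_0 = s_{n+1} = 1. *)
Definition ext_e (n : nat) (e : 'I_n -> nat) (k : nat) : nat :=
  match k with
  | 0 => 0%N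
  | k'.+1 => if (k' < n)%N =P true is ReflectT h then e (Ordinal h) else 0%N
  end.

Definition ext_s (n : nat) (s : 'I_n -> nat) (k : nat) : nat :=
  match k with
  | 0 => 1%N
  | k'.+1 => if (k' < n)%N =P true is ReflectT h then s (Ordinal h) else 1%N
  end.

Definition ratio (n : nat) (s e : 'I_n -> nat) (k : nat) : rat :=
  (ext_e e k)%:R / (ext_s s k)%:R.

(* Upper bound for the entries e_i (< s_i <= smax). *)
Definition smax (n : nat) (s : 'I_n -> nat) : nat := (\max_(i < n) s i)%N.

Definition inItilde (n : nat) (s : 'I_n -> nat)
  (e : {ffun 'I_n -> 'I_(smax s)}) : bool :=
  [forall i : 'I_n, (e i < s i)%N] &&
  [forall i : 'I_n.+1,
     ratio s (fun j => nat_of_ord (e j)) i != ratio s (fun j => nat_of_ord (e j)) i.+1].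

Definition asc (n : nat) (s : 'I_n -> nat) (e : {ffun 'I_n -> 'I_(smax s)}) : nat :=
  #|[set i : 'I_n.+1 | ratio s (fun j => nat_of_ord (e j)) i
                        < ratio s (fun j => nat_of_ord (e j)) i.+1]|.

Definition des (n : nat) (s : 'I_n -> nat) (e : {ffun 'I_n -> 'I_(smax s)}) : nat :=
  #|[set i : 'I_n.+1 | ratio s (fun j => nat_of_ord (e j)) i
                        > ratio s (fun j => nat_of_ord (e j)) i.+1]|.

Arguments inItilde {n} s e.
Arguments asc {n} s e.
Arguments des {n} s e.

(* Main.v *)
Require Import Defs.
From HB Require Import structures.
From mathcomp Require Import all_boot all_order all_algebra.
From mathcomp Require Import boolp reals zify ring lra.
Import Order.TTheory GRing.Theory Num.Theory.
Set Implicit Arguments. Unset Strict Implicit. Unset Printing Implicit Defensive.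
Local Open Scope ring_scope.

Lemma step0 (z : int) (d : rat) : -1 < d < 1 ->
  (0 < z%:~R + d < 1) = (d != 0) && (z == (nat_of_bool (d < 0))%:Z).
Proof.
move=> /andP[a b].
have hz : (z <= -1 \/ z = 0 \/ z = 1 \/ 2 <= z)%R by lia.
have c1 : (z <= -1)%R -> (z%:~R : rat) <= -1.
  by move=> h; rewrite -(rmorphN1 (intr : int -> rat)) ler_int.
have c2 : (2 <= z)%R -> 2 <= (z%:~R : rat).
  by move=> h; rewrite -[2 : rat]/((2 : int)%:~R) ler_int.
apply/idP/idP.
- move=> /andP[h1 h2].
  have hz2 : z = 0 \/ z = 1.
    case: hz => [h|[->|[->|h]]]; [|by left|by right|].
      by have h' := c1 h; exfalso; lra.
    by have h' := c2 h; exfalso; lra.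
  move: h1 h2; case: hz2 => ->.
    rewrite mulr0z add0r => h1 h2.
    by rewrite (gt_eqF h1) /= ltNge (ltW h1).
  rewrite mulr1z => h1 h2.
  have hd : d < 0 by lra.
  by rewrite hd (lt_eqF hd).
- case/andP=> hd /eqP ->; case: (ltrgtP d 0) hd => //= hd' _.
    rewrite mulr1z; apply/andP; split; lra.
  rewrite mulr0z; apply/andP; split; lra.
Qed.

Lemma step (c1 c2 : int) (r1 r2 : rat) : 0 <= r1 < 1 -> 0 <= r2 < 1 ->
  (0 < (c2%:~R + r2) - (c1%:~R + r1) < 1) =
  (r1 != r2) && (c2 == c1 + (nat_of_bool (r2 < r1))%:Z).
Proof.
move=> /andP[a1 b1] /andP[a2 b2].
have -> : (c2%:~R + r2) - (c1%:~R + r1) = (c2 - c1)%:~R + (r2 - r1).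
  by rewrite rmorphB /=; ring.
rewrite step0; last by apply/andP; split; lra.
by rewrite subr_eq0 eq_sym subr_lt0 subr_eq addrC.
Qed.

Lemma open_bound (R : realType) d m (V : 'M[int]_(d.+1, m)) x j :
  in_open_par R V x -> (`|x j| <= pbound V)%N.
Proof.
case=> lam [hl hy].
have h1 : (`|x j| <= \sum_(i < d.+1) `|wc V i j|)%N.
  rewrite -(ler_nat R) natr_sum natr_absz intr_norm hy.
  apply: le_trans (ler_norm_sum _ _ _) _; apply: ler_sum => i _.
  rewrite normrM natr_absz intr_norm; have /andP[a b] := hl i.
  rewrite (ger0_norm (ltW a)); have := normr_ge0 ((wc V i j)%:~R : R); nra.
apply: leq_trans h1 _; rewrite /pbound; apply: leq_sum => i _.
by rewrite (bigD1 j) //= leq_addr.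
Qed.

Section LHS.
Variable n : nat.
Variable s : 'I_n -> nat.
Hypothesis hs : forall i, (0 < s i)%N.

Lemma ext_s_lt j (h : (j < n)%N) : ext_s s j.+1 = s (Ordinal h).
Proof. rewrite /=; case: eqP => // p; congr s; exact: val_inj. Qed.

Lemma ext_s_ge j : ~~ (j < n)%N -> ext_s s j.+1 = 1%N.
Proof. move=> h; rewrite /=; case: eqP => // p; by rewrite p in h. Qed.

Lemma ext_e_lt (e : 'I_n -> nat) j (h : (j < n)%N) : ext_e e j.+1 = e (Ordinal h).
Proof. rewrite /=; case: eqP => // p; congr e; exact: val_inj. Qed.

Lemma ext_e_ge (e : 'I_n -> nat) j : ~~ (j < n)%N -> ext_e e j.+1 = 0%N.
Proof. move=> h; rewrite /=; case: eqP => // p; by rewrite p in h. Qed.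

Lemma ext_s_gt0 k : (0 < ext_s s k)%N.
Proof.
case: k => // j; case: (ltnP j n) => h.
  by rewrite (ext_s_lt h).
by rewrite ext_s_ge // -leqNgt.
Qed.

Lemma wc_lhs (i j : 'I_n.+1) :
  wc (lhs_vert s) i j = (if (i <= j)%N then (ext_s s j.+1)%:Z else 0).
Proof.
rewrite /wc; case: unliftP => [j'|] ->.
  rewrite mxE /=.
  have -> : bump n j' = j' by rewrite /bump leqNgt ltn_ord.
  case: eqP => [p|]; last by rewrite ltn_ord.
  by congr (if _ then _ else _); congr Posz; congr s; apply: val_inj.
rewrite /= -ltnS ltn_ord; case: eqP => // p; exfalso; move: p; by rewrite ltnn.
Qed.


Definition yk (y : 'I_n.+1 -> int) (k : nat) : int :=
  if k is k'.+1 then y (inord k') else 0.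
Definition T y k : rat := (yk y k)%:~R / (ext_s s k)%:R.
Definition Dp y := forall k, (k <= n)%N -> 0 < T y k.+1 - T y k < 1.

Lemma S_neq0 (R : numFieldType) k : (ext_s s k)%:R != 0 :> R.
Proof. by rewrite pnatr_eq0 -lt0n ext_s_gt0. Qed.

Lemma sum_wc (R : realType) (lam : 'I_n.+1 -> R) (j : 'I_n.+1) :
  \sum_(i < n.+1) lam i * (wc (lhs_vert s) i j)%:~R =
  (ext_s s j.+1)%:R * \sum_(0 <= i < j.+1) lam (inord i).
Proof.
transitivity (\sum_(0 <= i < n.+1) lam (inord i) *
    (if (i <= j)%N then (ext_s s j.+1)%:R else 0)).
  rewrite big_mkord; apply: eq_bigr => i _; rewrite wc_lhs inord_val.
  by case: ifP => _; rewrite ?mulr0.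
have hj : (j.+1 <= n.+1)%N by [].
rewrite (@big_cat_nat _ _ _ j.+1 0 n.+1) //=.
rewrite [X in _ + X]big1_seq ?addr0; last first.
  move=> i /andP[_]; rewrite mem_index_iota => /andP[hi _].
  by rewrite leqNgt hi mulr0.
rewrite mulr_sumr; apply: eq_big_nat => i /andP[_ hi].
by rewrite ltnS in hi; rewrite hi mulrC.
Qed.

Lemma TS y j : T y j.+1 = (y (inord j))%:~R / (ext_s s j.+1)%:R.
Proof. by []. Qed.

Lemma T0 y : T y 0 = 0.
Proof. by rewrite /T /= mul0r. Qed.

Lemma D_open (R : realType) y : Dp y -> in_open_par R (lhs_vert s) y.
Proof.
move=> hD; exists (fun i : 'I_n.+1 => ratr (T y i.+1 - T y i)); split.
  move=> i; have /andP[h1 h2] := hD i (ltn_ord i).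
  by rewrite ltr0q h1 /= -(rmorph1 (@ratr R)) ltr_rat.
move=> j; rewrite sum_wc.
rewrite (eq_big_nat _ _ (F2 := fun i => ratr (T y i.+1 - T y i))); last first.
  by move=> i /andP[_ hi]; rewrite inordK // (leq_trans hi).
rewrite -rmorph_sum telescope_sumr // T0 subr0 TS inord_val.
rewrite fmorph_div rmorph_int rmorph_nat mulrC divfK //.
exact: S_neq0.
Qed.

Lemma open_D (R : realType) y : in_open_par R (lhs_vert s) y -> Dp y.
Proof.
case=> lam [hl hy].
pose L k := \sum_(0 <= i < k) lam (inord i).
have hT k : (k <= n.+1)%N -> ratr (T y k) = L k.
  case: k => [|j] hj; first by rewrite T0 rmorph0 /L big_geq.
  have := hy (inord j); rewrite sum_wc inordK // TS => h.
  rewrite fmorph_div rmorph_int rmorph_nat h mulrC mulKf //; exact: S_neq0.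
move=> k hk.
have e : ratr (T y k.+1) - ratr (T y k) = lam (inord k).
  rewrite (hT k.+1 hk) (hT k (leqW hk)) /L /= (big_nat_recr _ _ _ (leq0n k)) /=; lra.
have /andP[a b] := hl (inord k); rewrite -e -rmorphB in a b.
by rewrite -(ltr0q R) a /= -(ltr_rat R) rmorph1 b.
Qed.


Notation EE := {ffun 'I_n -> 'I_(smax s)}.
Definition ee (e : EE) : 'I_n -> nat := fun j => nat_of_ord (e j).
Definition r (e : EE) (k : nat) : rat := Defs.ratio s (fun j => nat_of_ord (e j)) k.
Definition dc (e : EE) (k : nat) : nat :=
  (\sum_(i < k) nat_of_bool (r e i.+1 < r e i)%R)%N.
Definition ye (e : EE) : 'I_n.+1 -> int :=
  fun j => (ext_s s j.+1 * dc e j.+1 + ext_e (ee e) j.+1)%N%:Z.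

Lemma sj_neq0 (j : 'I_n) : (s j)%:Z != 0.
Proof. by rewrite eqz_nat -lt0n hs. Qed.

Lemma mod_bnd0 (y : int) (j : 'I_n) : (absz (y %% (s j)%:Z)%Z < s j)%N.
Proof.
have h0 : 0 < (s j)%:Z by rewrite ltz_nat hs.
have := ltz_pmod y h0; have := modz_ge0 y (sj_neq0 j); lia.
Qed.

Lemma mod_bnd (y : int) (j : 'I_n) : (absz (y %% (s j)%:Z)%Z < smax s)%N.
Proof.
apply: (leq_trans (mod_bnd0 y j)); exact: (leq_bigmax (F := s) j).
Qed.

Definition fe (y : 'I_n.+1 -> int) : EE :=
  [ffun j => Ordinal (mod_bnd (y (widen_ord (leqnSn n) j)) j)].

Lemma fe_val y j : (fe y j : nat) = absz (y (widen_ord (leqnSn n) j) %% (s j)%:Z)%Z.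
Proof. by rewrite ffunE. Qed.

Lemma fe_lt y j : (fe y j < s j)%N.
Proof. rewrite fe_val; exact: mod_bnd0. Qed.

Lemma ykS y j : yk y j.+1 = y (inord j).
Proof. by []. Qed.

Lemma ext_fe y k : (k <= n.+1)%N ->
  (ext_e (ee (fe y)) k)%:Z = ((yk y k) %% (ext_s s k)%:Z)%Z.
Proof.
case: k => [|j] hj; first by rewrite /= mod0z.
case: (ltnP j n) => h.
  rewrite (ext_e_lt _ h) (ext_s_lt h) /ee fe_val ykS.
  have -> : widen_ord (leqnSn n) (Ordinal h) = inord j.
    by apply: val_inj; rewrite /= inordK // ltnW.
  by rewrite gez0_abs //; apply: modz_ge0; apply: sj_neq0.
have hn : ~~ (j < n)%N by rewrite -leqNgt.
by rewrite (ext_e_ge _ hn) (ext_s_ge hn) modz1.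
Qed.

Lemma ee_lt_all (e : EE) : (forall i, e i < s i)%N ->
  forall k, (ext_e (ee e) k < ext_s s k)%N.
Proof.
move=> H [|j] //; case: (ltnP j n) => h.
  rewrite (ext_e_lt _ h) (ext_s_lt h); exact: H.
have hn : ~~ (j < n)%N by rewrite -leqNgt.
by rewrite (ext_e_ge _ hn) (ext_s_ge hn).
Qed.

Lemma r_range (e : EE) : (forall i, e i < s i)%N -> forall k, 0 <= r e k < 1.
Proof.
move=> H k; have := ee_lt_all H k; rewrite /r /Defs.ratio /ee => h.
have hS : 0 < (ext_s s k)%:R :> rat by rewrite ltr0n ext_s_gt0.
rewrite divr_ge0 ?ler0n //= ltr_pdivrMr // mul1r ltr_nat //.
Qed.

Lemma r_fe y k : (k <= n.+1)%N ->
  r (fe y) k = ((yk y k %% (ext_s s k)%:Z)%Z)%:~R / (ext_s s k)%:R.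
Proof. by move=> hk; rewrite -(ext_fe y hk) /r /Defs.ratio -pmulrn. Qed.

Lemma T_fe y k : (k <= n.+1)%N ->
  T y k = ((yk y k %/ (ext_s s k)%:Z)%Z)%:~R + r (fe y) k.
Proof.
move=> hk; rewrite r_fe // /T {1}(divz_eq (yk y k) (ext_s s k)%:Z).
rewrite rmorphD rmorphM /= mulrDl -[((ext_s s k)%:Z)%:~R]pmulrn mulfK //.
exact: S_neq0.
Qed.

Lemma step_D y k : Dp y -> (k <= n)%N ->
  (r (fe y) k != r (fe y) k.+1) &&
  ((yk y k.+1 %/ (ext_s s k.+1)%:Z)%Z ==
     (yk y k %/ (ext_s s k)%:Z)%Z + (nat_of_bool (r (fe y) k.+1 < r (fe y) k))%:Z).
Proof.
move=> hD hk; have := hD k hk.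
rewrite (T_fe y (k := k.+1)) // (T_fe y (k := k)) ?(leqW hk) // step //;
  apply: r_range; exact: fe_lt.
Qed.

Lemma D_fe y : Dp y -> inItilde s (fe y).
Proof.
move=> hD; apply/andP; split; apply/forallP => i; first exact: fe_lt.
have hi : (i <= n)%N by rewrite -ltnS.
by have /andP[] := step_D hD hi.
Qed.

Lemma dc_fe y : Dp y -> forall k, (k <= n.+1)%N ->
  (yk y k %/ (ext_s s k)%:Z)%Z = (dc (fe y) k)%:Z.
Proof.
move=> hD; elim=> [|k IH] hk; first by rewrite /= div0z /dc big_ord0.
have hk' : (k <= n)%N by rewrite -ltnS.
have /andP[_ /eqP ->] := step_D hD hk'.
by rewrite IH ?(ltnW hk) // /dc big_ord_recr /= PoszD.
Qed.

Lemma ye_fe y : Dp y -> ye (fe y) = y.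
Proof.
move=> hD; apply: funext => j.
rewrite /ye PoszD PoszM -(dc_fe hD) ?ext_fe ?ltn_ord //.
by rewrite mulrC -divz_eq ykS inord_val.
Qed.

Lemma yk_ye e k : (k <= n.+1)%N ->
  yk (ye e) k = (ext_s s k * dc e k + ext_e (ee e) k)%N%:Z.
Proof.
case: k => [|j] hj; first by rewrite /= /dc big_ord0.
by rewrite ykS /ye inordK.
Qed.

Lemma T_ye e k : (k <= n.+1)%N -> T (ye e) k = ((dc e k)%:Z)%:~R + r e k.
Proof.
move=> hk; rewrite /T yk_ye // /r /Defs.ratio -!pmulrn natrD natrM.
have := S_neq0 rat k; set S := (ext_s s k)%:R; move=> hS.
by field.
Qed.

Lemma Q_D e : inItilde s e -> Dp (ye e).
Proof.
case/andP => /forallP hlt /forallP hne k hk.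
have hk1 : (k < n.+1)%N by rewrite ltnS.
rewrite (T_ye e (k := k.+1)) // (T_ye e (k := k)) ?(leqW hk) // step;
  try (apply: r_range; exact: hlt).
apply/andP; split; first exact: (hne (Ordinal hk1)).
by rewrite /dc big_ord_recr /= PoszD.
Qed.

Lemma fe_ye e : inItilde s e -> fe (ye e) = e.
Proof.
case/andP => /forallP hlt _; apply/ffunP => j; apply: ord_inj.
rewrite fe_val /ye; have -> : (widen_ord (leqnSn n) j : nat) = j by [].
rewrite (ext_s_lt (ltn_ord j)) (ext_e_lt _ (ltn_ord j)).
have -> : Ordinal (ltn_ord j) = j by apply: val_inj.
by rewrite modz_nat absz_nat /ee mulnC modnMDl modn_small.
Qed.

Lemma des_dc e : des s e = dc e n.+1.
Proof.
rewrite /des /dc -sum1_card big_mkcond /=; apply: eq_bigr => i _.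
by rewrite inE /r; case: ifP.
Qed.

Lemma asc_des e : inItilde s e -> (asc s e + des s e)%N = n.+1.
Proof.
case/andP => _ /forallP hne.
rewrite /asc /des -!sum1_card big_mkcond [X in (_ + X)%N]big_mkcond -big_split /=.
transitivity (\sum_(i < n.+1) 1)%N; last by rewrite sum_nat_const card_ord muln1.
apply: eq_bigr => i _; rewrite !inE; have := hne i.
by case: ltrgtP => //; rewrite eqxx.
Qed.


Definition BB := pbound (lhs_vert s).

Definition enc (y : 'I_n.+1 -> int) : {ffun 'I_n.+1 -> 'I_(2 * BB).+1} :=
  [ffun j => inord (absz (y j + BB%:Z))].

Lemma boxpt_enc y : (forall j, `|y j| <= BB)%N -> boxpt (enc y) = y.
Proof.
move=> H; apply: funext => j; have := H j => hj.
rewrite /boxpt ffunE inordK; first lia.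
lia.
Qed.

Lemma enc_boxpt x : enc (boxpt x) = x.
Proof.
apply/ffunP => j; rewrite ffunE /boxpt subrK absz_nat; apply: val_inj.
by rewrite /= inordK.
Qed.

Lemma reindex_gen (R : realType) (Q : pred EE) (yE : EE -> 'I_n.+1 -> int)
  (fE : ('I_n.+1 -> int) -> EE) (F : int -> {poly int}) :
  (forall y, Dp y -> yE (fE y) = y) ->
  (forall e, Q e -> Dp (yE e) /\ fE (yE e) = e) ->
  (forall y, Dp y -> Q (fE y)) ->
  \sum_(x : {ffun 'I_n.+1 -> 'I_(2 * BB).+1}
          | `[< in_open_par R (lhs_vert s) (boxpt x) >]) F (boxpt x ord_max)
  = \sum_(e | Q e) F (yE e ord_max).
Proof.
move=> ha hb hc.
have bnd y : Dp y -> forall j, (`|y j| <= BB)%N.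
  by move=> h j; apply: open_bound; apply: (D_open R h).
rewrite (reindex_onto (fun e => enc (yE e)) (fun x => fE (boxpt x))) /=; last first.
  move=> x; rewrite asboolE => /open_D hx; rewrite ha //; exact: enc_boxpt.
apply: eq_big => e.
  apply/idP/idP.
    by case/andP; rewrite asboolE => /open_D hD /eqP <-; apply: hc.
  move=> hQ; have [hD he] := hb e hQ.
  by rewrite (boxpt_enc (bnd _ hD)) he eqxx andbT asboolE; apply: D_open.
case/andP; rewrite asboolE => /open_D hD /eqP he.
have hQ : Q e by rewrite -he; apply: hc.
have [hD' _] := hb e hQ.
by rewrite (boxpt_enc (bnd _ hD')).
Qed.

Lemma ye_max e : ye e ord_max = (des s e)%:Z.
Proof.
have hn : ~~ (n < n)%N by rewrite ltnn.
rewrite /ye; have -> : ((ord_max : 'I_n.+1) : nat) = n by [].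
by rewrite (ext_s_ge hn) (ext_e_ge _ hn) mul1n addn0 des_dc.
Qed.

Definition ww (j : 'I_n.+1) : int := (ext_s s j.+1 * j.+1)%N%:Z.

Lemma Dp_w y : Dp y -> Dp (fun j => ww j - y j).
Proof.
move=> hD.
have hT k : (k <= n.+1)%N -> T (fun j => ww j - y j) k = k%:R - T y k.
  case: k => [|j] hj; first by rewrite !T0 subr0.
  rewrite !TS /ww inordK // rmorphB /= PoszM rmorphM /= -!pmulrn.
  have := S_neq0 rat j.+1; set S := (ext_s s j.+1)%:R; move=> hS.
  by field.
move=> k hk; rewrite (hT k.+1) // (hT k) ?(leqW hk) //.
have := hD k hk; rewrite -addn1 natrD; move=> /andP[a b]; apply/andP; split; lra.
Qed.

End LHS.

Unset Implicit Arguments.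

Theorem proposition3p3 (R : realType) (n : nat) (s : 'I_n -> nat) :
  (forall i, (0 < s i)%N) ->
  lstar R (lhs_vert s) = \sum_(e | inItilde s e) 'X^(asc s e) /\
  lstar R (lhs_vert s) = \sum_(e | inItilde s e) 'X^(des s e).
Proof.
move=> hs.
have L1 := @reindex_gen n s hs R (inItilde s) (@ye n s) (fe hs)
  (fun z => 'X^(absz z)) (@ye_fe n s hs)
  (fun e he => conj (Q_D hs he) (fe_ye hs he)) (@D_fe n s hs).
have L2 := @reindex_gen n s hs R (inItilde s)
  (fun e j => ww s j - ye e j) (fun y => fe hs (fun j => ww s j - y j))
  (fun z => 'X^(absz z)).
rewrite /lstar; split.
  rewrite L2.
  - apply: eq_bigr => e he.
    have hn : ~~ (n < n)%N by rewrite ltnn.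
    have hw : ww s ord_max = (n.+1)%:Z.
      rewrite /ww; have -> : ((ord_max : 'I_n.+1) : nat) = n by [].
      by rewrite (ext_s_ge s hn) mul1n.
    rewrite hw ye_max; have := asc_des he => h.
    congr 'X^_; lia.
  - move=> y hy; apply: funext => j.
    by rewrite (ye_fe hs (Dp_w hs hy)) subKr.
  - move=> e he; split; first exact (Dp_w hs (Q_D hs he)).
    have -> : (fun j => ww s j - (ww s j - ye e j)) = ye e.
      by apply: funext => j; rewrite subKr.
    exact: fe_ye.
  - by move=> y hy; apply: D_fe; exact (Dp_w hs hy).
rewrite L1; apply: eq_bigr => e _; by rewrite ye_max absz_nat.
Qed.
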